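(* Almost all graphs $G$ have a $\chi_{harm}$-mate; i.e. the harmonious polynomial $\chi_{harm}$ is weakly distinguishing.
   Context: All graphs are finite and simple. For $k\in\mathbb{N}$, a harmonious colouring of $G$ with $k$ colours is a map $f:V(G)\to[k]$ that is a proper colouring and such that for all $i,j\in[k]$ the induced subgraph $G[f^{-1}(i)\cup f^{-1}(j)]$ has at most one edge. $\chi_{harm}(G;\lambda)$ denotes the number of harmonious colourings of $G$ with $\lambda$ colours; it is a polynomial in $\lambda$. For a graph polynomial $P$, $H$ is a $P$-mate of $G$ if $P(G)=P(H)$ but $H\not\cong G$; $G$ is $P$-unique if it has no $P$-mate. Let $\mathcal{G}(n)$ be the set of isomorphism classes of graphs on $n$ vertices and $U_P(n)$ the set of $P$-unique graphs in $\mathcal{G}(n)$; $P$ is weakly distinguishing if $\lim_{n\to\infty}|U_P(n)|/|\mathcal{G}(n)|=0$. *)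

(* Defs.v *)
From HB Require Import structures.
From mathcomp Require Import all_boot all_order all_algebra all_fingroup.
From mathcomp Require Import all_classical all_reals all_analysis.
Set Implicit Arguments. Unset Strict Implicit. Unset Printing Implicit Defensive.

Definition graph (n : nat) := {set 'I_n * 'I_n}.

Definition simpleb n (g : graph n) : bool :=
  [forall x, forall y, (((x, y) \in g) == ((y, x) \in g)) && ((x, x) \notin g)].

Definition iso n m (g : graph n) (h : graph m) : Prop :=
  exists f : 'I_n -> 'I_m, bijective f /\
    forall x y, ((f x, f y) \in h) = ((x, y) \in g).

Definition isob n (g h : graph n) : bool :=
  [exists s : {perm 'I_n}, forall x, forall y, ((s x, s y) \in h) == ((x, y) \in g)].

Definition edges n (g : graph n) : {set {set 'I_n}} :=
  [set [set p.1; p.2] | p in g].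

Definition harmonious n k (g : graph n) (f : {ffun 'I_n -> 'I_k}) : bool :=
  [forall x, forall y, ((x, y) \in g) ==> (f x != f y)] &&
  [forall i, forall j,
     #|[set e in edges g | e \subset [set x | (f x == i) || (f x == j)]]| <= 1].

Definition chi_harm n (g : graph n) (lam : nat) : nat :=
  #|[set f : {ffun 'I_n -> 'I_lam} | harmonious g f]|.

(* G is chi_harm-unique: every graph H with chi_harm(H) = chi_harm(G)
   (as polynomials, i.e. as functions of lambda) is isomorphic to G *)
Definition harm_unique n (g : graph n) : Prop :=
  forall m (h : graph m), simpleb h -> chi_harm g =1 chi_harm h -> iso g h.

Definition iso_classes n : {set {set graph n}} :=
  [set [set h | simpleb h && isob g h] | g in [set g : graph n | simpleb g]].

Definition unique_classes n : {set {set graph n}} :=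
  [set C in iso_classes n | `[< forall g, g \in C -> harm_unique g >]].

(* Main.v *)
Require Import Defs.
From HB Require Import structures.
From mathcomp Require Import all_boot all_order all_algebra all_fingroup.
From mathcomp Require Import all_classical all_reals all_analysis.
Import GRing.Theory Num.Theory numFieldNormedType.Exports.
Set Implicit Arguments. Unset Strict Implicit. Unset Printing Implicit Defensive.

Section Act.
Variable n : nat.
Definition gact (g : graph n) (s : {perm 'I_n}) : graph n :=
  [set p | ((s^-1)%g p.1, (s^-1)%g p.2) \in g].
Lemma gact1 : gact^~ 1%g =1 id.
Proof. by move=> g; apply/setP => -[x y]; rewrite inE invg1 !perm1. Qed.
Lemma gactM g : act_morph gact g.
Proof. by move=> s t; apply/setP => -[x y]; rewrite !inE invMg !permM. Qed.
Definition gaction := TotalAction gact1 gactM.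
Lemma gactE g (s : {perm 'I_n}) x y : ((s x, s y) \in gact g s) = ((x, y) \in g).
Proof. by rewrite inE /= !permK. Qed.

Lemma simplebP (g : graph n) : reflect ((forall x y, ((x,y) \in g) = ((y,x) \in g)) /\ forall x, (x,x) \notin g) (simpleb g).
Proof.
apply: (iffP forallP) => [H|[H1 H2] x]; last by apply/forallP => y; rewrite H1 eqxx H2.
split=> [x y|x]; first by have /forallP/(_ y)/andP[/eqP] := H x.
by have /forallP/(_ x)/andP[_] := H x.
Qed.
End Act.
Section Classes.
Variable n : nat.
Local Notation S := [set g : graph n | simpleb g].

Lemma gact_simple (g : graph n) s : simpleb g -> simpleb (gact g s).
Proof.
move=> /simplebP [H1 H2]; apply/simplebP; split=> [x y|x]; rewrite !inE /=.
  by rewrite H1.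
by rewrite H2.
Qed.

Lemma gact_inv (g : graph n) s : gact (gact g s) (s^-1)%g = g.
Proof. by rewrite -gactM mulgV gact1. Qed.

Lemma gact_simpleE (g : graph n) s : simpleb (gact g s) = simpleb g.
Proof.
apply/idP/idP; last exact: gact_simple.
by move=> /(gact_simple (s^-1)%g); rewrite gact_inv.
Qed.

Lemma class_orbit (g : graph n) : simpleb g ->
  [set h | simpleb h && isob g h] = orbit (gaction n) [set: {perm 'I_n}] g.
Proof.
move=> sg; apply/setP => h; rewrite inE; apply/idP/imsetP.
  case/andP => _ /existsP[s /forallP H]; exists s; first by rewrite inE.
  apply/setP => -[x y] /=.
  rewrite -[x](permKV s) -[y](permKV s) gactE.
  by have /forallP/(_ ((s^-1)%g y))/eqP := H ((s^-1)%g x).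
move=> [s _ ->] /=; rewrite gact_simpleE sg /=.
apply/existsP; exists s; apply/forallP => x; apply/forallP => y.
by rewrite gactE.
Qed.

Lemma iso_classesE : iso_classes n = orbit (gaction n) [set: {perm 'I_n}] @: S.
Proof.
rewrite /iso_classes; apply: eq_in_imset => g; rewrite inE => sg.
exact: class_orbit.
Qed.

Lemma acts_S : [acts [set: {perm 'I_n}], on S | gaction n].
Proof. by apply/actsP => s _ g; rewrite !inE /= gact_simpleE. Qed.

Definition bad (g : graph n) : bool :=
  [exists x, exists y, [&& x != y, (x, y) \notin g &
     [forall z, ~~ (((x, z) \in g) && ((y, z) \in g))]]].

Lemma bad_gact (g : graph n) s : bad g -> bad (gact g s).
Proof.
case/existsP => x /existsP [y /and3P[xy nxy /forallP H]].
apply/existsP; exists (s x); apply/existsP; exists (s y).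
rewrite (inj_eq perm_inj) xy gactE nxy /=.
apply/forallP => z; rewrite -[z](permKV s) !gactE; exact: H.
Qed.

Lemma bad_gactE (g : graph n) s : bad (gact g s) = bad g.
Proof.
apply/idP/idP; last exact: bad_gact.
by move=> /(bad_gact (s^-1)%g); rewrite gact_inv.
Qed.

Definition Bd := [set g in S | bad g].

Lemma acts_Bd : [acts [set: {perm 'I_n}], on Bd | gaction n].
Proof. by apply/actsP => s _ g; rewrite !inE /= gact_simpleE bad_gactE. Qed.

End Classes.
Section Harm.
Variable n : nat.

Lemma nbadP (g : graph n) : ~~ bad g ->
  forall x y, x != y -> (x, y) \notin g -> exists z, ((x, z) \in g) && ((y, z) \in g).
Proof.
move=> nb x y xy nxy; apply/existsP; apply: contraR nb => H.
apply/existsP; exists x; apply/existsP; exists y; rewrite xy nxy /=.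
by rewrite -negb_exists.
Qed.

Lemma harm_inj (g : graph n) k (f : {ffun 'I_n -> 'I_k}) : simpleb g -> ~~ bad g ->
  harmonious g f = injectiveb f.
Proof.
move=> /simplebP[sym irr] nb; apply/idP/idP.
  case/andP => /forallP prop /forallP harm.
  apply/injectiveP => x y fxy; apply/eqP; apply: contraT => xy.
  case: (boolP ((x, y) \in g)) => [gxy|ngxy].
    by have /forallP/(_ y)/implyP/(_ gxy) := prop x; rewrite fxy eqxx.
  have [z /andP[gxz gyz]] := nbadP nb xy ngxy.
  have /forallP/(_ (f z)) := harm (f x); rewrite leqNgt => /negP H; exfalso; apply: H.
  apply/card_gt1P; exists [set x; z], [set y; z]; split.
  - rewrite !inE; apply/andP; split; first by apply/imsetP; exists (x, z).
    by apply/fintype.subsetP => w; rewrite !inE => /orP[]/eqP->; rewrite eqxx ?orbT.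
  - rewrite !inE; apply/andP; split; first by apply/imsetP; exists (y, z).
    by apply/fintype.subsetP => w; rewrite !inE => /orP[]/eqP->; rewrite ?fxy eqxx ?orbT.
  - apply/negP => /eqP E; have : y \in [set x; z] by rewrite E !inE eqxx.
    rewrite !inE => /orP[/eqP yx|/eqP yz]; first by rewrite yx eqxx in xy.
    by move: gyz; rewrite yz (negbTE (irr z)).
move=> /injectiveP inj; apply/andP; split.
  apply/forallP => x; apply/forallP => y; apply/implyP => gxy.
  rewrite (inj_eq inj); apply/negP => /eqP exy.
  by move: gxy; rewrite exy (negbTE (irr y)).
apply/forallP => i; apply/forallP => j.
set X := [set x | (f x == i) || (f x == j)].
have cX : #|X| <= 2.
  rewrite -(card_imset X inj); apply: leq_trans (_ : #|[set i; j]| <= 2).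
    apply: subset_leq_card; apply/fintype.subsetP => c /imsetP[x]; rewrite !inE => H ->.
    by [].
  by rewrite cards2; case: (i != j).
have key : forall e, e \in [set e in edges g | e \subset X] -> e = X.
  move=> e; rewrite inE => /andP[/imsetP[[a b] gab ->] sub].
  apply/eqP; rewrite eqEcard sub /= cards2.
  have -> : (a != b) by apply/negP => /eqP ab; move: gab; rewrite ab (negbTE (irr b)).
  exact: cX.
apply/card_le1P => e1 H1 e2; apply/idP/idP => [H2|].
  by rewrite inE (key _ H1) (key _ H2).
by move/eqP ->.
Qed.

Lemma chi_harm_inj (g : graph n) lam : simpleb g -> ~~ bad g ->
  chi_harm g lam = #|[set f : {ffun 'I_n -> 'I_lam} | injectiveb f]|.
Proof.
move=> sg nb; rewrite /chi_harm; apply: eq_card => f; rewrite !inE.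
exact: harm_inj.
Qed.

Lemma iso_card (g h : graph n) : iso g h -> #|g| = #|h|.
Proof.
case=> f [[fi fK Kf] H].
have injF : injective (fun p : 'I_n * 'I_n => (f p.1, f p.2)).
  move=> [a b] [c d] [] /(can_inj fK) -> /(can_inj fK) -> //.
rewrite -(card_imset g injF); apply: eq_card => -[a b].
apply/imsetP/idP => [[[c d] gcd [-> ->]]|hab]; first by rewrite H.
by exists (fi a, fi b); rewrite /= ?Kf // -H !Kf.
Qed.

End Harm.

Section Complete.
Variable m : nat.
Local Notation n := m.+3.
Definition o0 : 'I_n := ord0.
Definition o1 : 'I_n := inord 1.
Definition o2 : 'I_n := inord 2.
Lemma o01 : o0 != o1. Proof. by rewrite /o0 /o1 -val_eqE /= inordK. Qed.
Lemma o02 : o0 != o2. Proof. by rewrite /o0 /o2 -val_eqE /= inordK. Qed.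
Lemma o12 : o1 != o2. Proof. by rewrite /o1 /o2 -val_eqE /= !inordK. Qed.
Lemma o10 : (o1 == o0) = false. Proof. by apply/negbTE; rewrite eq_sym o01. Qed.

Definition Kn : graph n := [set p | p.1 != p.2].
Definition Kn' : graph n := Kn :\ (o0, o1) :\ (o1, o0).

Lemma Kn_simple : simpleb Kn.
Proof. by apply/simplebP; split=> [x y|x]; rewrite !inE ?eqxx // eq_sym. Qed.

Lemma Kn'_simple : simpleb Kn'.
Proof.
apply/simplebP; split=> [x y|x]; rewrite /Kn' /Kn !inE /= ?eqxx ?andbF //.
rewrite !xpair_eqE [y == x]eq_sym.
by case: (x == o0); case: (x == o1); case: (y == o0); case: (y == o1).
Qed.

Lemma Kn_nbad : ~~ bad Kn.
Proof.
apply/negP => /existsP[x /existsP[y /and3P[xy]]].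
by rewrite inE /= xy.
Qed.

Lemma Kn'_nbad : ~~ bad Kn'.
Proof.
apply/negP => /existsP[x /existsP[y /and3P[xy nxy /forallP H]]].
have e01 : (o0 == o1) = false by apply/negbTE; exact: o01.
have e02 : (o0 == o2) = false by apply/negbTE; exact: o02.
have e12 : (o1 == o2) = false by apply/negbTE; exact: o12.
have e10 : (o1 == o0) = false by rewrite eq_sym.
have e20 : (o2 == o0) = false by rewrite eq_sym.
have e21 : (o2 == o1) = false by rewrite eq_sym.
have : ((x, y) == (o0, o1)) || ((x, y) == (o1, o0)).
  move: nxy; rewrite /Kn' /Kn !inE /= xy andbT.
  by case: ((x, y) == (o1, o0)); case: ((x, y) == (o0, o1)).
case/orP => /eqP [? ?]; subst; have := H o2;
  rewrite /Kn' /Kn !inE /= !xpair_eqE ?e01 ?e02 ?e12 ?e10 ?e20 ?e21 /= ?andbF /=;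
  by move/negP; apply.
Qed.

Lemma card_Kn' : #|Kn'| < #|Kn|.
Proof.
rewrite /Kn'; apply: proper_card; apply: (proper_sub_trans (B := Kn :\ (o0, o1))).
  apply/properP; split; first exact: subsetDl.
  exists (o1, o0); first by rewrite !inE /= xpair_eqE o10.
  by rewrite !inE eqxx.
exact: subsetDl.
Qed.

Lemma nbad_not_unique (g : graph n) : simpleb g -> ~~ bad g -> ~ harm_unique g.
Proof.
move=> sg nb U.
have E1 : chi_harm g =1 chi_harm Kn.
  by move=> l; rewrite (chi_harm_inj l sg nb) (chi_harm_inj l Kn_simple Kn_nbad).
have E2 : chi_harm g =1 chi_harm Kn'.
  by move=> l; rewrite (chi_harm_inj l sg nb) (chi_harm_inj l Kn'_simple Kn'_nbad).
have e1 := iso_card (U _ _ Kn_simple E1).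
have e2 := iso_card (U _ _ Kn'_simple E2).
by have := card_Kn'; rewrite -e1 -e2 ltnn.
Qed.
End Complete.
From mathcomp Require Import zify.
Section Toggle.
Variable n : nat.
Definition tog (u v : 'I_n) (g : graph n) : graph n :=
  [set p | (p \in g) != ((p == (u, v)) || (p == (v, u)))].

Lemma togK u v : involutive (tog u v).
Proof.
move=> g; apply/setP => p; rewrite !inE.
by case: (p \in g); case: (_ || _).
Qed.

Lemma tog_other u v g a b : (a, b) != (u, v) -> (a, b) != (v, u) ->
  ((a, b) \in tog u v g) = ((a, b) \in g).
Proof.
move=> h1 h2; rewrite inE.
have -> : ((a, b) == (u, v)) || ((a, b) == (v, u)) = false by apply/norP; split.
by case: (_ \in g).
Qed.

Lemma tog_on u v g : ((u, v) \in tog u v g) = ~~ ((u, v) \in g).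
Proof. by rewrite inE eqxx /=; case: (_ \in g). Qed.

Lemma tog_simple u v g : u != v -> simpleb g -> simpleb (tog u v g).
Proof.
move=> uv /simplebP[sym irr]; apply/simplebP; split=> [a b|a]; rewrite !inE.
  rewrite sym !xpair_eqE.
  by case: (a == u); case: (b == v); case: (a == v); case: (b == u).
rewrite !xpair_eqE (negbTE (irr a)) /=.
have E : (a == u) && (a == v) = false.
  by apply/negP => /andP[/eqP e1 /eqP e2]; move: uv; rewrite -e1 -e2 eqxx.
by rewrite E andbC E.
Qed.
End Toggle.

Section BadCount.
Variable n : nat.
Variables x y : 'I_n.
Hypothesis xy : x != y.
Local Notation S := [set g : graph n | simpleb g].

Definition BZ (Z : {set 'I_n}) := [set g : graph n | [&& simpleb g, (x, y) \notin g &
   [forall z in Z, ~~ (((x, z) \in g) && ((y, z) \in g))]]].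

Lemma forall_in_setU1 (P : pred 'I_n) z (Z : {set 'I_n}) :
  [forall w in z |: Z, P w] = P z && [forall w in Z, P w].
Proof.
apply/forall_inP/andP => [H|[Pz /forall_inP H] w].
  split; first by apply: H; rewrite !inE eqxx.
  by apply/forall_inP => w wZ; apply: H; rewrite !inE wZ orbT.
by rewrite !inE => /orP[/eqP->//|]; apply: H.
Qed.

Section Step.
Variables (z : 'I_n) (Z : {set 'I_n}).
Hypotheses (zZ : z \notin Z) (zx : z != x) (zy : z != y).

Lemma tog_BZ u g : (u == x) || (u == y) -> g \in BZ Z -> tog u z g \in BZ Z.
Proof.
move=> hu gB; move: gB; rewrite inE => /and3P[sg nxy /forall_inP H].
rewrite [tog u z g \in _]inE.
have uz : u != z by case/orP: hu => /eqP->; rewrite eq_sym.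
have yz : (y == z) = false by rewrite eq_sym; exact/negbTE.
have xz : (x == z) = false by rewrite eq_sym; exact/negbTE.
apply/and3P; split; first exact: tog_simple.
  by rewrite tog_other //; rewrite !xpair_eqE ?yz ?xz ?andbF ?andFb.
apply/forall_inP => w wZ.
have wz : (w == z) = false by apply/negbTE; apply: contraNneq zZ => <-.
rewrite !tog_other ?H //; rewrite !xpair_eqE ?wz ?yz ?xz ?andbF ?andFb //.
Qed.


Lemma card_setU_le (T : finType) (A B : {set T}) : #|A :|: B| <= #|A| + #|B|.
Proof. by rewrite cardsU leq_subr. Qed.

Lemma arith3 (u a1 a2 a3 c : nat) : u <= a1 + a2 + a3 -> a1 <= c -> a2 <= c -> a3 <= c -> u <= 3 * c.
Proof. lia. Qed.
Lemma arith4 (b c b' : nat) : b = c + b' -> b' <= 3 * c -> 4 * b' <= 3 * b.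
Proof. lia. Qed.

Lemma BZ_step : 4 * #|BZ (z |: Z)| <= 3 * #|BZ Z|.
Proof.
set Q := [set g : graph n | ((x, z) \in g) && ((y, z) \in g)].
set C := BZ Z :&: Q.
have e : #|BZ Z| = #|C| + #|BZ (z |: Z)|.
  rewrite -(cardsID Q (BZ Z)); congr (_ + _); apply: eq_card => g.
  rewrite !inE forall_in_setU1.
  by case: (simpleb g); case: ((x, y) \in g); rewrite /= ?andbF.
have xzyz : (x, z) != (y, z) by rewrite xpair_eqE (negbTE xy).
have xzzy : (x, z) != (z, y) by rewrite xpair_eqE eq_sym (negbTE zx).
have yzxz : (y, z) != (x, z) by rewrite eq_sym.
have yzzx : (y, z) != (z, x) by rewrite xpair_eqE eq_sym (negbTE zy).
have hx : (x == x) || (x == y) by rewrite eqxx.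
have hy : (y == x) || (y == y) by rewrite eqxx orbT.
have sub : BZ (z |: Z) \subset (tog x z @: C) :|: (tog y z @: C) :|:
             ((fun g => tog x z (tog y z g)) @: C).
  apply/fintype.subsetP => g gB.
  have gBZ : g \in BZ Z.
    move: gB; rewrite !inE forall_in_setU1.
    by case/and3P => -> -> /andP[_ ->].
  have hn : ~~ (((x, z) \in g) && ((y, z) \in g)).
    by move: gB; rewrite !inE forall_in_setU1 => /and3P[_ _ /andP[]].
  case Ea: ((x, z) \in g); case Eb: ((y, z) \in g); rewrite ?Ea ?Eb in hn => //.
  - apply/setUP; left; apply/setUP; right; apply/imsetP; exists (tog y z g); last by rewrite togK.
    apply/setIP; split; first exact: tog_BZ.
    by rewrite [_ \in Q]inE tog_on tog_other // Ea Eb.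
  - apply/setUP; left; apply/setUP; left; apply/imsetP; exists (tog x z g); last by rewrite togK.
    apply/setIP; split; first exact: tog_BZ.
    by rewrite [_ \in Q]inE tog_on (tog_other _ yzxz yzzx) Ea Eb.
  - apply/setUP; right; apply/imsetP; exists (tog y z (tog x z g)); last by rewrite !togK.
    apply/setIP; split; first by apply: tog_BZ => //; apply: tog_BZ.
    rewrite [_ \in Q]inE tog_on (tog_other _ xzyz xzzy) tog_on.
    by rewrite (tog_other _ yzxz yzzx) Ea Eb.
have le : #|BZ (z |: Z)| <= 3 * #|C|.
  apply: leq_trans (subset_leq_card sub) _.
  apply: leq_trans (card_setU_le _ _) _.
  have h1 := leq_imset_card (tog x z) C.
  have h2 := leq_imset_card (tog y z) C.
  have h3 := leq_imset_card (fun g => tog x z (tog y z g)) C.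
  have h4 := card_setU_le (tog x z @: C) (tog y z @: C).
  exact: arith3 (leq_add h4 (leqnn _)) h1 h2 h3.
exact: arith4 e le.
Qed.
End Step.

Lemma arith5 (p q a b c : nat) : 4 * a <= 3 * b -> p * b <= q * c -> (4 * p) * a <= (3 * q) * c.
Proof.
move=> h1 h2.
have h3 : p * (4 * a) <= p * (3 * b) by rewrite leq_mul2l h1 orbT.
have h4 : 3 * (p * b) <= 3 * (q * c) by rewrite leq_mul2l h2 orbT.
have e1 : 4 * p * a = p * (4 * a) by rewrite mulnCA mulnA.
have e2 : 3 * q * c = 3 * (q * c) by rewrite mulnA.
have e3 : p * (3 * b) = 3 * (p * b) by rewrite mulnCA.
by rewrite e1 e2; apply: leq_trans h3 _; rewrite e3.
Qed.

Lemma BZ_iter k : forall Z : {set 'I_n}, #|Z| = k -> Z \subset ~: [set x; y] ->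
  4 ^ k * #|BZ Z| <= 3 ^ k * #|BZ finset.set0|.
Proof.
elim: k => [|k IH] Z cZ sZ.
  by move/cards0_eq: cZ => ->; rewrite !expn0 !mul1n.
have /card_gt0P [z zZ] : 0 < #|Z| by rewrite cZ.
have cZ' : #|Z :\ z| = k by move: cZ; rewrite (cardsD1 z Z) zZ add1n => -[].
have sZ' : Z :\ z \subset ~: [set x; y].
  exact: fintype.subset_trans (subsetDl Z [set z]) sZ.
have : z \in ~: [set x; y] by move/fintype.subsetP: sZ; apply.
rewrite !inE negb_or => /andP[zx zy].
have zZ' : z \notin Z :\ z by rewrite !inE eqxx.
have st := BZ_step zZ' zx zy; rewrite finset.setD1K // in st.
by rewrite !expnS; apply: arith5 st (IH _ cZ' sZ').
Qed.

Lemma BZ0 : #|BZ finset.set0| <= #|S|.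
Proof. by apply: subset_leq_card; apply/fintype.subsetP => g; rewrite !inE => /and3P[]. Qed.

Lemma Bxy_bound : 4 ^ (n - 2) * #|BZ (~: [set x; y])| <= 3 ^ (n - 2) * #|S|.
Proof.
have c : #|~: [set x; y]| = n - 2.
  have e := cardsC [set x; y]; rewrite cards2 xy card_ord /= in e.
  by rewrite -[X in _ = X - 2]e addKn.
apply: leq_trans (BZ_iter c (subxx _)) _.
by rewrite leq_mul2l BZ0 orbT.
Qed.
End BadCount.

Lemma card_bigcup_le (I T : finType) (P : pred I) (A : I -> {set T}) :
  #|\bigcup_(i | P i) A i| <= \sum_(i | P i) #|A i|.
Proof.
elim/big_rec2: _ => [|i X k Pi IH]; first by rewrite cards0.
by apply: leq_trans (card_setU_le _ _) _; rewrite leq_add2l.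
Qed.

Lemma Bd_bound n : 4 ^ (n - 2) * #|Bd n| <= (n * n) * 3 ^ (n - 2) * #|[set g : graph n | simpleb g]|.
Proof.
have sub : Bd n \subset \bigcup_(p : 'I_n * 'I_n | p.1 != p.2) BZ p.1 p.2 (~: [set p.1; p.2]).
  apply/fintype.subsetP => g; rewrite !inE => /andP[sg /existsP[x /existsP[y /and3P[xy nxy /forallP H]]]].
  apply/bigcupP; exists (x, y) => //=.
  by rewrite inE sg nxy /=; apply/forall_inP => z _; apply: H.
apply: leq_trans (leq_mul (leqnn _) (subset_leq_card sub)) _.
apply: leq_trans (leq_mul (leqnn _) (card_bigcup_le _ _)) _.
rewrite big_distrr /=.
apply: (@leq_trans (\sum_(p : 'I_n * 'I_n | p.1 != p.2) 3 ^ (n - 2) * #|[set g : graph n | simpleb g]|)).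
  by apply: leq_sum => p h; apply: Bxy_bound.
apply: leq_trans (_ : \sum_(p : 'I_n * 'I_n) 3 ^ (n - 2) * #|[set g : graph n | simpleb g]| <= _).
  by rewrite [X in _ <= X](bigID (fun p : 'I_n * 'I_n => p.1 != p.2)) /= leq_addr.
by rewrite sum_nat_const card_prod card_ord mulnA.
Qed.
Section FixCount.
Variable n : nat.
Local Notation S := [set g : graph n | simpleb g].
Variable s : {perm 'I_n}.
Variable M : {set 'I_n}.
Hypothesis MsM : forall x, x \in M -> s x \notin M.

Definition Zc := [set z | (z \notin M) && (s z \notin M)].
Definition Pset := finset.setX M Zc.
Definition symd (gQ : graph n * {set 'I_n * 'I_n}) : graph n :=
  [set p | (p \in gQ.1) != ((p \in gQ.2) || ((p.2, p.1) \in gQ.2))].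

Lemma symP_out a b : ((a, b) \in Pset) || ((b, a) \in Pset) ->
  ~~ (((s a, s b) \in Pset) || ((s b, s a) \in Pset)).
Proof.
rewrite !finset.in_setX !inE; case/orP => /and3P[aM bM sbM].
  by rewrite (negbTE (MsM aM)) (negbTE sbM).
by rewrite (negbTE (MsM aM)) (negbTE sbM).
Qed.

Lemma fix_mem g : g \in ('Fix_(S | gaction n)[s])%g ->
  simpleb g /\ forall a b, ((s a, s b) \in g) = ((a, b) \in g).
Proof.
rewrite inE => /andP[]; rewrite inE => sg /afix1P /= E; split => // a b.
by rewrite -{1}E gactE.
Qed.

Definition sq (Q : {set 'I_n * 'I_n}) p := (p \in Q) || ((p.2, p.1) \in Q).

Lemma sq_P (Q : {set 'I_n * 'I_n}) p : Q \subset Pset -> sq Q p -> sq Pset p.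
Proof. by move=> sQ /orP[h|h]; apply/orP; [left|right]; apply: (fintype.subsetP sQ). Qed.

Lemma symd_inj : {in finset.setX ('Fix_(S | gaction n)[s])%g (powerset Pset) &, injective symd}.
Proof.
move=> [g1 Q1] [g2 Q2]; rewrite !finset.in_setX !powersetE /=.
move=> /andP[/fix_mem[_ F1] sQ1] /andP[/fix_mem[_ F2] sQ2] E.
have E' : forall p, ((p \in g1) != (p \in g2)) = (sq Q1 p != sq Q2 p).
  move=> p; have := congr1 (fun G : graph n => p \in G) E; rewrite /symd !inE /sq.
  by case: (p \in g1); case: (p \in g2); case: (_ || _); case: (_ || _).
have inPP : forall p, sq Q1 p != sq Q2 p -> sq Pset p.
  move=> p; case h1: (sq Q1 p); first by move=> _; exact: sq_P h1.
  by case h2: (sq Q2 p) => // _; exact: sq_P h2.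
have eg : g1 = g2.
  apply/setP => -[a b]; apply/eqP; apply: contraT => ne.
  have h1 : sq Pset (a, b) by apply: inPP; rewrite -E'.
  have ne' : ((s a, s b) \in g1) != ((s a, s b) \in g2) by rewrite F1 F2.
  have h2 : sq Pset (s a, s b) by apply: inPP; rewrite -E'.
  by move: (symP_out h1); rewrite /sq /= in h2; rewrite h2.
have eqs : forall p, sq Q1 p = sq Q2 p.
  by move=> p; apply/eqP/negbNE; rewrite -E' eg eqxx.
have only : forall (Q : {set 'I_n * 'I_n}) (p : 'I_n * 'I_n), Q \subset Pset -> p \in Pset -> ((p.2, p.1) \in Q) = false.
  move=> Q [a b] sQ /=; rewrite finset.in_setX => /andP[aM _].
  apply: contraTF aM => /(fintype.subsetP sQ); rewrite finset.in_setX !inE.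
  by case/andP => _ /andP[].
have eQ : Q1 = Q2.
  apply/setP => p; case pP: (p \in Pset).
    by have := eqs p; rewrite /sq !only // !orbF.
  have n1 : (p \in Q1) = false by apply: contraFF (fintype.subsetP sQ1 p) pP.
  have n2 : (p \in Q2) = false by apply: contraFF (fintype.subsetP sQ2 p) pP.
  by rewrite n1 n2.
by rewrite eg eQ.
Qed.

Lemma symd_S (g : graph n) (Q : {set 'I_n * 'I_n}) : simpleb g -> Q \subset Pset -> simpleb (symd (g, Q)).
Proof.
move=> /simplebP[sym irr] sQ; apply/simplebP; split=> [a b|a]; rewrite !inE /=.
  by rewrite sym orbC.
rewrite (negbTE (irr a)) orbb /=.
case h: ((a, a) \in Q) => //; move: h => /(fintype.subsetP sQ); rewrite finset.in_setX !inE => /andP[aM /andP[]].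
by rewrite aM.
Qed.

Lemma fix_count : #|('Fix_(S | gaction n)[s])%g| * 2 ^ #|Pset| <= #|S|.
Proof.
rewrite -card_powerset -cardsX -(card_in_imset symd_inj).
apply: subset_leq_card; apply/fintype.subsetP => g' /imsetP[[g Q]].
rewrite finset.in_setX powersetE /= => /andP[/fix_mem[sg _] sQ] ->.
by rewrite inE symd_S.
Qed.

Lemma card_Zc : n <= #|Zc| + 2 * #|M|.
Proof.
have e : ~: Zc = M :|: s @^-1: M.
  by apply/setP => z; rewrite !inE negb_and !negbK.
have e2 := cardsC Zc; rewrite e card_ord in e2.
rewrite -[X in X <= _]e2 leq_add2l; apply: leq_trans (card_setU_le _ _) _.
by rewrite card_preimset ?addnn ?mul2n //; exact: perm_inj.
Qed.
End FixCount.
Lemma arithP k m z n : 4 * m <= n -> n <= z + 2 * m -> (k <= 3 * m \/ n < 4 * m + 4) ->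
  k <= n -> k * ((n - 3) %/ 8) <= m * z.
Proof.
move=> h1 h2 h3 h4; have hd := leq_trunc_div (n - 3) 8.
move: hd; set d := (n - 3) %/ 8 => hd.
case: h3 => h3.
  have hz : 3 * d <= z by lia.
  apply: leq_trans (leq_mul h3 (leqnn d)) _.
  by rewrite (mulnC 3 m) -mulnA leq_mul2l hz orbT.
have hm : 2 * d <= m by lia.
have hz : n <= 2 * z by lia.
apply: leq_trans (leq_mul h4 (leqnn d)) _.
have : n * (2 * d) <= (2 * z) * m by apply: leq_mul.
rewrite mulnCA -mulnA (mulnC z m) leq_pmul2l //.
Qed.

Section Mexist.
Variable n : nat.
Variable s : {perm 'I_n}.
Definition supp := [set x | s x != x].
Definition okM (M : {set 'I_n}) :=
  [&& M \subset supp, [forall x in M, s x \notin M] & 4 * #|M| <= n].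

Lemma exM : exists M, okM M /\ (#|supp| <= 3 * #|M| \/ n < 4 * #|M| + 4).
Proof.
have ok0 : okM finset.set0.
  rewrite /okM cards0 muln0 andbT; apply/andP; split.
    by apply/fintype.subsetP => x; rewrite inE.
  by apply/forall_inP => x; rewrite inE.
case: (@arg_maxnP _ finset.set0 okM (fun M => #|M|) ok0) => M okMM maxM.
exists M; split => //.
case: (ltnP n (4 * #|M| + 4)) => [h|h]; [by right|left].
move: (okMM) => /and3P[sM /forall_inP MsM c4].
have cover : supp \subset M :|: s @^-1: M :|: (s^-1)%g @^-1: M.
  apply/fintype.subsetP => x xs; rewrite !inE.
  case xM: (x \in M) => //; case sxM: (s x \in M) => //; case ixM: ((s^-1)%g x \in M) => //=.
  have : okM (x |: M).
    apply/and3P; split.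
    - by rewrite finset.subUset finset.sub1set xs sM.
    - apply/forall_inP => y; rewrite !inE => /orP[/eqP->|yM].
        by rewrite sxM orbF; move: xs; rewrite inE.
      rewrite negb_or MsM // andbT; apply/negP => /eqP syx.
      by move: ixM; rewrite -syx permK yM.
    - by rewrite cardsU1 xM /= mulnDr muln1 addnC.
  by move/maxM; rewrite cardsU1 xM /= add1n ltnn.
apply: leq_trans (subset_leq_card cover) _.
apply: leq_trans (card_setU_le _ _) _.
have := card_setU_le M (s @^-1: M).
rewrite !card_preimset; try exact: perm_inj.
move=> h'; apply: leq_trans (leq_add h' (leqnn _)) _.
by rewrite !mulSn mul0n addn0 addnA.
Qed.
End Mexist.

Lemma fix_bound n (s : {perm 'I_n}) :
  #|('Fix_([set g : graph n | simpleb g] | gaction n)[s])%g| * 2 ^ (#|supp s| * ((n - 3) %/ 8))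
    <= #|[set g : graph n | simpleb g]|.
Proof.
have [M [/and3P[sM /forall_inP MsM c4] h]] := exM s.
apply: leq_trans (fix_count MsM).
rewrite leq_mul2l; apply/orP; right; apply: leq_pexp2l => //.
rewrite /Pset cardsX; apply: arithP => //; first exact: card_Zc.
by apply: leq_trans (max_card _) _; rewrite card_ord.
Qed.
Lemma card_supp_k n (x0 : 'I_n) k :
  #|[set s : {perm 'I_n} | #|supp s| == k]| <= (n * n) ^ k.
Proof.
pose F (s : {perm 'I_n}) : {ffun 'I_k -> 'I_n * 'I_n} :=
  [ffun i : 'I_k => (nth x0 (enum (supp s)) i, s (nth x0 (enum (supp s)) i))].
have Finj : {in [set s : {perm 'I_n} | #|supp s| == k] &, injective F}.
  move=> s1 s2; rewrite !inE => /eqP c1 /eqP c2 E.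
  have Ei : forall i : 'I_k, nth x0 (enum (supp s1)) i = nth x0 (enum (supp s2)) i /\
                             s1 (nth x0 (enum (supp s1)) i) = s2 (nth x0 (enum (supp s2)) i).
    by move=> i; have := congr1 (fun f : {ffun 'I_k -> 'I_n * 'I_n} => f i) E; rewrite /F !ffunE => -[-> ->].
  have ee : enum (supp s1) = enum (supp s2).
    apply: (@eq_from_nth _ x0); first by rewrite -!cardE c1 c2.
    by move=> i; rewrite -cardE c1 => ik; exact: (Ei (Ordinal ik)).1.
  apply/permP => x; case xs: (x \in supp s1).
    have xe : x \in enum (supp s1) by rewrite mem_enum.
    have ik : index x (enum (supp s1)) < k by rewrite -c1 cardE index_mem.
    have := (Ei (Ordinal ik)).2; rewrite /= nth_index // -ee nth_index //.
  have xs2 : (x \in supp s2) = false by rewrite -mem_enum -ee mem_enum.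
  by move: xs xs2; rewrite !inE => /negbFE/eqP -> /negbFE/eqP ->.
rewrite -(card_in_imset Finj); apply: leq_trans (max_card _) _.
by rewrite card_ffun card_prod !card_ord.
Qed.
Lemma supp_gt0 n (s : {perm 'I_n}) : s != 1%g -> 0 < #|supp s|.
Proof.
move=> s1; apply/card_gt0P; apply/existsP; apply: contraR s1 => H.
apply/eqP/permP => x; rewrite perm1; apply/eqP.
by move: H; rewrite negb_exists => /forallP/(_ x); rewrite !inE negbK.
Qed.

Lemma sum_le_sub (I : finType) (P1 P2 : pred I) (F : I -> nat) :
  (forall i, P1 i -> P2 i) -> \sum_(i | P1 i) F i <= \sum_(i | P2 i) F i.
Proof.
move=> H; rewrite [X in X <= _]big_mkcond [X in _ <= X]big_mkcond; apply: leq_sum => i _.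
by case h: (P1 i); [rewrite (H _ h) | case: (P2 i)].
Qed.

Lemma sum_fix_bound n : 0 < n -> n ^ 4 <= 2 ^ ((n - 3) %/ 8) ->
  n * \sum_(s : {perm 'I_n} | s != 1%g) #|('Fix_([set g : graph n | simpleb g] | gaction n)[s])%g|
    <= #|[set g : graph n | simpleb g]|.
Proof.
move=> n0 hn.
set Sn := #|[set g : graph n | simpleb g]|.
set Fx := fun s : {perm 'I_n} => #|('Fix_([set g : graph n | simpleb g] | gaction n)[s])%g|.
have x0 : 'I_n := Ordinal n0.
pose p (s : {perm 'I_n}) : 'I_n.+1 := inord #|supp s|.
have pE : forall s, val (p s) = #|supp s|.
  move=> s; rewrite /p /= inordK // ltnS; apply: leq_trans (max_card _) _; by rewrite card_ord.
rewrite (partition_big p (fun j : 'I_n.+1 => 0 < j)); last by move=> s s1; rewrite pE supp_gt0.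
have Gk : forall j : 'I_n.+1, 0 < j ->
    n ^ 2 * \sum_(s | (s != 1%g) && (p s == j)) Fx s <= Sn.
  move=> j j0.
  set G := \sum_(s | _) _.
  have h1 : G <= \sum_(s in [set s : {perm 'I_n} | #|supp s| == j]) Fx s.
    apply: sum_le_sub => s /andP[_ /eqP <-]; by rewrite inE pE.
  have h2 : n ^ (4 * j) * \sum_(s in [set s : {perm 'I_n} | #|supp s| == j]) Fx s
              <= #|[set s : {perm 'I_n} | #|supp s| == j]| * Sn.
    rewrite big_distrr /= -sum_nat_const; apply: leq_sum => s; rewrite inE => /eqP sj.
    apply: leq_trans (fix_bound s); rewrite mulnC leq_mul2l; apply/orP; right.
    by rewrite sj expnM (mulnC j) expnM leq_exp2r.
  have eN : n ^ (4 * j) = n ^ (2 * j) * n ^ (2 * j) by rewrite -expnD -mulnDl.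
  have h3 : #|[set s : {perm 'I_n} | #|supp s| == j]| <= n ^ (2 * j).
    by apply: leq_trans (card_supp_k x0 j) _; rewrite mulnn -expnM.
  have h4 : n ^ (2 * j) * (n ^ (2 * j) * G) <= n ^ (2 * j) * Sn.
    rewrite mulnA -eN; apply: leq_trans (leq_mul (leqnn _) h1) _.
    by apply: leq_trans h2 _; rewrite leq_mul2r h3 orbT.
  rewrite leq_pmul2l ?expn_gt0 ?n0 // in h4.
  apply: leq_trans _ h4; rewrite leq_mul2r; apply/orP; right; apply: leq_pexp2l => //.
  by rewrite -{1}(muln1 2) leq_mul2l j0.
have tot : n ^ 2 * \sum_(j : 'I_n.+1 | 0 < j) \sum_(s | (s != 1%g) && (p s == j)) Fx s <= n * Sn.
  rewrite big_distrr /=; apply: (@leq_trans (\sum_(j : 'I_n.+1 | 0 < j) Sn)).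
    by apply: leq_sum => j j0; exact: Gk.
  rewrite big_mkcond big_ord_recl /= add0n.
  by rewrite (eq_bigr (fun _ => Sn)) ?sum_nat_const ?card_ord // => i _; rewrite lift0.
by rewrite expnS expn1 -mulnA leq_pmul2l in tot.
Qed.
From mathcomp Require Import zify.
Lemma exp_mono a b e : a <= b -> a ^ e <= b ^ e.
Proof. by move=> ab; elim: e => // e IH; rewrite !expnS leq_mul. Qed.

Lemma pow_step t : 9 <= t -> (8 * t + 18) ^ 4 <= 2 * (8 * t + 10) ^ 4.
Proof.
move=> ht.
have h : 10 * (8 * t + 18) <= 11 * (8 * t + 10) by lia.
have h' := exp_mono 4 h; rewrite !expnMn in h'.
have c : 11 ^ 4 <= 10 ^ 4 * 2 by [].
have : 10 ^ 4 * (8 * t + 18) ^ 4 <= 10 ^ 4 * (2 * (8 * t + 10) ^ 4).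
  apply: leq_trans h' _; rewrite mulnA leq_mul2r; apply/orP; right; exact: c.
by rewrite leq_pmul2l.
Qed.

Lemma pow_bound t : 40 <= t -> (8 * t + 10) ^ 4 <= 2 ^ t.
Proof.
elim: t => // t IH ht.
case: (ltngtP 39 t) => [lt|gt|eq].
- have e : 8 * t.+1 + 10 = 8 * t + 18 by lia.
  rewrite e (expnS 2 t).
  have t9 : 9 <= t by move: lt; clear; lia.
  apply: leq_trans (pow_step t9) _.
  by rewrite leq_mul2l IH.
- by move: ht gt; clear; lia.
- rewrite -eq; have -> : 2 ^ 40 = (2 ^ 10) ^ 4 by rewrite -expnM.
  by apply: exp_mono.
Qed.

Lemma E1 n : 323 <= n -> n ^ 4 <= 2 ^ ((n - 3) %/ 8).
Proof.
move=> hn; set t := (n - 3) %/ 8.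
have t40 : 40 <= t by rewrite /t; apply: (@leq_div2r 8 320); lia.
have hc := ltn_ceil (n - 3) (isT : 0 < 8); rewrite -/t in hc.
have nt : n <= 8 * t + 10 by lia.
apply: leq_trans (pow_bound t40); exact: exp_mono.
Qed.

Lemma E2 n : 323 <= n -> n ^ 3 * 3 ^ (n - 2) <= 4 ^ (n - 2).
Proof.
move=> hn; set m := n - 2.
have h1 : n ^ 3 <= 2 ^ (m %/ 3).
  apply: leq_trans (_ : n ^ 4 <= _); first by rewrite leq_pexp2l // (leq_trans _ hn).
  apply: leq_trans (E1 hn) _; apply: leq_pexp2l => //.
  apply: leq_trans (leq_div2l _ _ _ : (n - 3) %/ 8 <= (n - 3) %/ 3) _ => //.
  by apply: leq_div2r; rewrite /m; lia.
apply: leq_trans (leq_mul h1 (leqnn _)) _.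
rewrite {2 3}(divn_eq m 3) !expnD (mulnC _ 3) !expnM.
set j := m %/ 3; set r := m %% 3.
rewrite mulnCA mulnA -expnMn.
apply: leq_mul; last exact: exp_mono.
exact: exp_mono.
Qed.
Lemma arithB (n a b c s : nat) : 0 < a -> a * b <= n * n * c * s -> n ^ 3 * c <= a -> n * b <= s.
Proof.
move=> a0 h1 h2.
have : a * (n * b) <= a * s.
  rewrite mulnCA; apply: leq_trans (leq_mul (leqnn n) h1) _.
  have e : n * (n * n * c * s) = (n ^ 3 * c) * s.
    by rewrite !expnS expn0 muln1 !mulnA.
  by rewrite e leq_mul2r h2 orbT.
by rewrite leq_pmul2l.
Qed.

Lemma arithF (n U I : nat) : 0 < n -> n * U <= 2 * I -> n.+1 * U <= 4 * I.
Proof.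
move=> n0 h; apply: leq_trans (_ : (2 * n) * U <= _).
  by rewrite leq_mul2r; apply/orP; right; lia.
by rewrite -mulnA (_ : 4 = 2 * 2) // -mulnA leq_mul2l h orbT.
Qed.

Lemma main_bound m : 320 <= m ->
  m.+3 * #|unique_classes m.+3| <= 2 * #|iso_classes m.+3|.
Proof.
move=> hm; have hn : 323 <= m.+3 by [].
set S := [set g : graph m.+3 | simpleb g].
have BdS : Bd m.+3 \subset S by apply/fintype.subsetP => g; rewrite !inE => /andP[].
have U_sub : unique_classes m.+3 \subset orbit (gaction m.+3) [set: {perm 'I_m.+3}] @: Bd m.+3.
  apply/fintype.subsetP => C; rewrite inE => /andP[CI /asboolP H].
  move: CI => /imsetP[g]; rewrite inE => sg CE.
  have gC : g \in C.
    rewrite CE inE sg /=; apply/existsP; exists 1%g.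
    by apply/forallP => x; apply/forallP => y; rewrite !perm1.
  have hu := H g gC.
  have bg : bad g.
    case nb: (bad g) => //; exfalso; apply: (nbad_not_unique sg _ hu); by rewrite nb.
  apply/imsetP; exists g; first by rewrite !inE sg bg.
  by rewrite CE; exact: class_orbit.
have FCb := Frobenius_Cauchy (acts_Bd m.+3).
have FCs := Frobenius_Cauchy (acts_S m.+3); rewrite -iso_classesE in FCs.
set G := #|[set: {perm 'I_m.+3}]| in FCb FCs.
have G0 : 0 < G by apply/card_gt0P; exists 1%g; rewrite inE.
have e1 : \sum_(a in [set: {perm 'I_m.+3}]) #|('Fix_(Bd m.+3 | gaction m.+3)[a])%g|
      <= #|Bd m.+3| + \sum_(a : {perm 'I_m.+3} | a != 1%g) #|('Fix_(S | gaction m.+3)[a])%g|.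
  rewrite (bigD1 1%g) ?inE //=; apply: leq_add.
    by apply: subset_leq_card; exact: finset.subsetIl.
  apply: (@leq_trans (\sum_(a in [set: {perm 'I_m.+3}] | a != 1%g) #|('Fix_(S | gaction m.+3)[a])%g|)).
    by apply: leq_sum => a _; apply: subset_leq_card; apply: finset.setSI BdS.
  by apply: sum_le_sub => a /andP[_ ->].
have e2 : #|S| <= \sum_(a in [set: {perm 'I_m.+3}]) #|('Fix_(S | gaction m.+3)[a])%g|.
  rewrite (bigD1 1%g) ?inE //=; apply: leq_trans (leq_addr _ _).
  apply: subset_leq_card; apply/fintype.subsetP => g gS; rewrite inE gS /=.
  by apply/afix1P; exact: gact1.
have hB : m.+3 * #|Bd m.+3| <= #|S|.
  apply: (arithB _ (Bd_bound m.+3) (E2 hn)); by rewrite expn_gt0.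
have hF : m.+3 * \sum_(a : {perm 'I_m.+3} | a != 1%g) #|('Fix_(S | gaction m.+3)[a])%g| <= #|S|.
  exact: sum_fix_bound (E1 hn).
have hO : m.+3 * #|orbit (gaction m.+3) [set: {perm 'I_m.+3}] @: Bd m.+3| <= 2 * #|iso_classes m.+3|.
  rewrite -(leq_pmul2r G0) -mulnA -FCb -mulnA -FCs.
  apply: leq_trans (leq_mul (leqnn _) e1) _; rewrite mulnDr.
  apply: leq_trans (leq_add hB hF) _; rewrite addnn -mul2n leq_mul2l e2 orbT //.
apply: leq_trans hO; rewrite leq_mul2l (subset_leq_card U_sub) orbT //.
Qed.

Lemma final_nat n : 323 <= n -> n.+1 * #|unique_classes n| <= 4 * #|iso_classes n|.
Proof.
case: n => [|[|[|m]]] // hm.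
by apply: arithF => //; apply: main_bound.
Qed.

Unset Implicit Arguments.
Import numFieldNormedType.Exports.
Local Open Scope classical_set_scope.
Local Open Scope ring_scope.

Theorem theorem4 (R : realType) :
  (fun n : nat => (#|unique_classes n|%:R / #|iso_classes n|%:R : R)) @ \oo --> (0 : R).
Proof.
apply: (@squeeze_cvgr _ _ _ _ (fun=> 0) (fun n => 4 * harmonic n)).
- near=> n.
  have hn : (323 <= n)%N by near: n; exact: nbhs_infty_ge.
  have h := final_nat hn.
  apply/andP; split; first by rewrite divr_ge0.
  rewrite /harmonic /=.
  case I0: (#|iso_classes n| == 0)%N.
    by rewrite (eqP I0) invr0 mulr0 mulr_ge0 // invr_ge0.
  have Ip : (0 < #|iso_classes n|%:R :> R) by rewrite ltr0n lt0n I0.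
  rewrite ler_pdivrMr // mulrAC ler_pdivlMr ?ltr0n //.
  by rewrite -!natrM ler_nat mulnC.
- exact: cvg_cst.
- rewrite -(mulr0 (4:R)); apply: cvgMl_tmp; exact: cvg_harmonic.
Unshelve. all: by end_near.
Qed.
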